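(* $\mathfrak{d}_{\mathrm{game}}^{\mathrm{I}} = \mathfrak{d}_{\mathrm{game}}^{\mathrm{II}} = \mathfrak{d}_{\mathrm{game}^*}^{\mathrm{I}} = \mathfrak{d}$ and $\mathfrak{d}_{\mathrm{game}^*}^{\mathrm{II}} = \mathfrak{c}$.
   Context: For $x,y\in\omega^\omega$, $x\le^* y$ means $x(n)\le y(n)$ for all but finitely many $n$. $\mathfrak{d}$ is the least size of a family $\mathcal{A}\subseteq\omega^\omega$ such that every $x\in\omega^\omega$ satisfies $x\le^* y$ for some $y\in\mathcal{A}$; $\mathfrak{c}=2^{\aleph_0}$. For $\mathcal{A}\subseteq\omega^\omega$, the dominating game with respect to $\mathcal{A}$: at round $k$, Player I plays $n_k\in\omega$ and then Player II plays $i_k\in\{0,1\}$; Player II wins iff $i_k=1$ for all but finitely many $k$ and there is $g\in\mathcal{A}$ with $\{k: i_k=1\}=\{k: n_k<g(k)\}$. The dominating* game with respect to $\mathcal{A}$: at round $k$, Player I plays $n_k\in\omega$ and then Player II plays $m_k\in\omega$; Player II wins iff $\langle m_k:k\in\omega\rangle\in\mathcal{A}$ and $n_k<m_k$ for all but finitely many $k$. $\mathfrak{d}_{\mathrm{game}}^{\mathrm{I}}$ (resp. $\mathfrak{d}_{\mathrm{game}^*}^{\mathrm{I}}$) is the least $|\mathcal{A}|$ such that Player I has no winning strategy in the dominating (resp. dominating* ) game with respect to $\mathcal{A}$; $\mathfrak{d}_{\mathrm{game}}^{\mathrm{II}}$ (resp. $\mathfrak{d}_{\mathrm{game}^*}^{\mathrm{II}}$)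 is the least $|\mathcal{A}|$ such that Player II has a winning strategy in the dominating (resp. dominating* ) game with respect to $\mathcal{A}$. *)

(* Defs.v *)
(* Sets of functions are predicates; cardinal characteristics
   are compared via injections. *)
From Stdlib Require Import List Arith.
Import ListNotations.

Definition baire := nat -> nat.

Definition prefix {X : Type} (f : nat -> X) (k : nat) : list X :=
  map f (seq 0 k).

Definition cofinitely (P : nat -> Prop) : Prop :=
  exists N, forall k, N <= k -> P k.

Definition le_star (x y : baire) : Prop := cofinitely (fun n => x n <= y n).

Definition dominating (A : baire -> Prop) : Prop :=
  forall x : baire, exists y, A y /\ le_star x y.

Definition le_card {X Y : Type} (B : X -> Prop) (A : Y -> Prop) : Prop :=
  exists f : X -> Y,
    (forall x, B x -> A (f x)) /\
    (forall x y, B x -> B y -> f x = f y -> x = y).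

(* min{|A| : P A} = min{|B| : Q B} *)
Definition same_min (P Q : (baire -> Prop) -> Prop) : Prop :=
  (forall A, P A -> exists B, Q B /\ le_card B A) /\
  (forall B, Q B -> exists A, P A /\ le_card A B).

(* min{|A| : P A} = |2^omega| = c *)
Definition min_is_continuum (P : (baire -> Prop) -> Prop) : Prop :=
  (forall A, P A -> le_card (fun _ : nat -> bool => True) A) /\
  (exists A, P A /\ le_card A (fun _ : nat -> bool => True)).

Definition dom_II_wins (A : baire -> Prop) (n : nat -> nat) (i : nat -> bool) : Prop :=
  cofinitely (fun k => i k = true) /\
  exists g, A g /\ (forall k, i k = true <-> n k < g k).

(* Strategy of I: n_k from II's previous moves i_0..i_{k-1}. *)
Definition dom_I_play (sigma : list bool -> nat) (i : nat -> bool) : nat -> nat :=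
  fun k => sigma (prefix i k).
Definition dom_I_winning (A : baire -> Prop) (sigma : list bool -> nat) : Prop :=
  forall i : nat -> bool, ~ dom_II_wins A (dom_I_play sigma i) i.

(* Strategy of II: i_k from I's moves n_0..n_k. *)
Definition dom_II_play (tau : list nat -> bool) (n : nat -> nat) : nat -> bool :=
  fun k => tau (prefix n (S k)).
Definition dom_II_winning (A : baire -> Prop) (tau : list nat -> bool) : Prop :=
  forall n : nat -> nat, dom_II_wins A n (dom_II_play tau n).

Definition domstar_II_wins (A : baire -> Prop) (n m : nat -> nat) : Prop :=
  A m /\ cofinitely (fun k => n k < m k).

Definition domstar_I_play (sigma : list nat -> nat) (m : nat -> nat) : nat -> nat :=
  fun k => sigma (prefix m k).
Definition domstar_I_winning (A : baire -> Prop) (sigma : list nat -> nat) : Prop :=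
  forall m : nat -> nat, ~ domstar_II_wins A (domstar_I_play sigma m) m.

Definition domstar_II_play (tau : list nat -> nat) (n : nat -> nat) : nat -> nat :=
  fun k => tau (prefix n (S k)).
Definition domstar_II_winning (A : baire -> Prop) (tau : list nat -> nat) : Prop :=
  forall n : nat -> nat, domstar_II_wins A n (domstar_II_play tau n).

Definition P_game_I (A : baire -> Prop) : Prop :=
  ~ exists sigma, dom_I_winning A sigma.
Definition P_game_II (A : baire -> Prop) : Prop :=
  exists tau, dom_II_winning A tau.
Definition P_gamestar_I (A : baire -> Prop) : Prop :=
  ~ exists sigma, domstar_I_winning A sigma.
Definition P_gamestar_II (A : baire -> Prop) : Prop :=
  exists tau, domstar_II_winning A tau.

(* Main.v *)
Require Import Defs.
From Stdlib Require Import List Arith Lia Cantor Classical ClassicalEpsilon FunctionalExtensionality ProofIrrelevance.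
From mathcomp Require classical_sets.
Import ListNotations.

Definition cid {A : Type} {P : A -> Prop} (H : exists x, P x) : {x | P x} :=
  constructive_indefinite_description P H.

Lemma prefix_length {X} (f : nat -> X) k : length (prefix f k) = k.
Proof. unfold prefix. rewrite length_map, length_seq. reflexivity. Qed.

Lemma prefix_S {X} (f : nat -> X) k : prefix f (S k) = prefix f k ++ [f k].
Proof. unfold prefix. rewrite seq_S, map_app. reflexivity. Qed.

Lemma prefix_firstn {X} (f : nat -> X) a b : a <= b -> firstn a (prefix f b) = prefix f a.
Proof.
  intros H. induction H.
  - rewrite <- (prefix_length f a) at 1. apply firstn_all.
  - rewrite prefix_S, firstn_app, prefix_length.
    replace (a - m) with 0 by lia. simpl. rewrite app_nil_r. exact IHle.
Qed.

Lemma prefix_nth {X} (f : nat -> X) k i d : i < k -> nth i (prefix f k) d = f i.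
Proof.
  intros H. unfold prefix. rewrite nth_indep with (d' := f 0) by (rewrite length_map, length_seq; lia).
  rewrite map_nth, seq_nth by lia. reflexivity.
Qed.

Lemma prefix_of_list {X} (f : nat -> X) (l : list X) d :
  (forall i, i < length l -> f i = nth i l d) -> prefix f (length l) = l.
Proof.
  intros H. apply nth_ext with (d := d) (d' := d).
  - apply prefix_length.
  - intros n Hn. rewrite prefix_length in Hn. rewrite prefix_nth by lia. auto.
Qed.

Fixpoint Lr {X} (r : list X -> X) (k : nat) : list X :=
  match k with 0 => [] | S k => Lr r k ++ [r (Lr r k)] end.
Definition selfrec {X} (r : list X -> X) (k : nat) : X := r (Lr r k).

Lemma prefix_selfrec {X} (r : list X -> X) k : prefix (selfrec r) k = Lr r k.
Proof.
  induction k; [reflexivity|]. rewrite prefix_S, IHk. reflexivity.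
Qed.

Lemma selfrec_eq {X} (r : list X -> X) k : selfrec r k = r (prefix (selfrec r) k).
Proof. rewrite prefix_selfrec. reflexivity. Qed.

Lemma in_list_max x l : In x l -> x <= list_max l.
Proof.
  intros H. assert (H2 := proj1 (list_max_le l (list_max l)) (le_n _)).
  rewrite Forall_forall in H2. auto.
Qed.

Lemma le_card_refl {X} (A : X -> Prop) : le_card A A.
Proof. exists (fun x => x). split; auto. Qed.

Lemma le_star_trans x y z : le_star x y -> le_star y z -> le_star x z.
Proof.
  intros [N1 H1] [N2 H2]. exists (N1 + N2). intros k Hk.
  specialize (H1 k ltac:(lia)). specialize (H2 k ltac:(lia)). lia.
Qed.




Lemma gameI_dom A : P_game_I A -> dominating A.
Proof.
  intros HP x. apply NNPP. intros Hn. apply HP.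
  exists (fun s => x (length s)). intros i [[N HN] [g [Ag Hg]]].
  apply Hn. exists g. split; auto.
  exists N. intros k Hk. specialize (HN k Hk). apply Hg in HN.
  unfold dom_I_play in HN. rewrite prefix_length in HN. lia.
Qed.

Lemma gamestarI_dom A : P_gamestar_I A -> dominating A.
Proof.
  intros HP x. apply NNPP. intros Hn. apply HP.
  exists (fun s => x (length s)). intros m [Am [N HN]].
  apply Hn. exists m. split; auto.
  exists N. intros k Hk. specialize (HN k Hk).
  unfold domstar_I_play in HN. rewrite prefix_length in HN. lia.
Qed.

Lemma gameII_dom A : P_game_II A -> dominating A.
Proof.
  intros [tau Ht] x. destruct (Ht x) as [[N HN] [g [Ag Hg]]].
  exists g. split; auto. exists N. intros k Hk. specialize (HN k Hk). apply Hg in HN. lia.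
Qed.

Fixpoint allbl (k : nat) : list (list bool) :=
  match k with
  | 0 => [[]]
  | S k => map (cons false) (allbl k) ++ map (cons true) (allbl k)
  end.

Lemma allbl_in s : In s (allbl (length s)).
Proof.
  induction s as [|b s IH]; simpl; [auto|].
  apply in_or_app. destruct b; [right|left]; apply in_map; auto.
Qed.

Lemma dom_gameI B : dominating B -> P_game_I B.
Proof.
  intros HB [sigma Hs].
  set (h := fun k => S (list_max (map sigma (allbl k)))).
  destruct (HB h) as [g [Bg [N HN]]].
  set (i := selfrec (fun s : list bool => Nat.ltb (sigma s) (g (length s)))).
  apply (Hs i). split.
  - exists N. intros k Hk. unfold i. rewrite selfrec_eq. fold i.
    apply Nat.ltb_lt. rewrite prefix_length.
    specialize (HN k Hk). unfold h in HN.
    assert (sigma (prefix i k) <= list_max (map sigma (allbl k))).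
    { apply in_list_max. apply in_map. rewrite <- (prefix_length i k) at 2. apply allbl_in. }
    lia.
  - exists g. split; auto. intros k. unfold dom_I_play.
    unfold i at 1. rewrite selfrec_eq. fold i. rewrite prefix_length.
    apply Nat.ltb_lt.
Qed.

Lemma gamestarII_top : P_gamestar_II (fun _ => True).
Proof.
  exists (fun s => S (last s 0)). intros n. split; [exact I|].
  exists 0. intros k _. unfold domstar_II_play. rewrite prefix_S, last_last. lia.
Qed.

Lemma baire_into_cantor : le_card (fun _ : baire => True) (fun _ : nat -> bool => True).
Proof.
  exists (fun x j => Nat.eqb (x (fst (of_nat j))) (snd (of_nat j))).
  split; [auto|]. intros x y _ _ H. apply functional_extensionality. intros k.
  assert (E := f_equal (fun f => f (to_nat (k, x k))) H). cbv beta in E.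
  rewrite cancel_of_to in E. simpl in E. rewrite Nat.eqb_refl in E.
  symmetry in E. apply Nat.eqb_eq in E. auto.
Qed.


Fixpoint code (s : list nat) : nat :=
  match s with [] => 0 | a :: s => S (to_nat (a, code s)) end.

Lemma code_inj s t : code s = code t -> s = t.
Proof.
  revert t; induction s as [|a s IH]; intros [|b t]; cbn -[to_nat]; intros H; try discriminate; auto.
  assert (H' : to_nat (a, code s) = to_nat (b, code t)) by congruence.
  apply (f_equal of_nat) in H'. rewrite !cancel_of_to in H'.
  injection H' as -> H'. f_equal. auto.
Qed.

Lemma code_len s : length s <= code s.
Proof.
  induction s as [|a s IH]; cbn -[to_nat]; [lia|].
  pose proof (to_nat_non_decreasing a (code s)). lia.
Qed.

Definition mb (b : baire) : baire := selfrec (fun s => b (code s)).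

Lemma dom_gamestarI B : dominating B ->
  exists A, P_gamestar_I A /\ le_card A B.
Proof.
  intros HB.
  set (A := fun a => exists b, B b /\ a = mb b).
  exists A. split.
  - intros [sigma Hs].
    set (x := fun j => match excluded_middle_informative (exists s, code s = j) with
                       | left H => S (sigma (proj1_sig (cid H)))
                       | right _ => 0 end).
    destruct (HB x) as [y [By [N HN]]].
    apply (Hs (mb y)). split; [exists y; auto|].
    exists N. intros k Hk. unfold domstar_I_play.
    unfold mb at 2. rewrite selfrec_eq. fold (mb y).
    set (s := prefix (mb y) k).
    assert (Hc : N <= code s) by (pose proof (code_len s); unfold s in *; rewrite prefix_length in *; lia).
    specialize (HN _ Hc). unfold x in HN.
    destruct (excluded_middle_informative _) as [H|H].
    + destruct (cid H) as [s' Hs']. simpl in HN. apply code_inj in Hs'. subst s'. lia.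
    + exfalso. apply H. eauto.
  - exists (fun a => match excluded_middle_informative (exists b, B b /\ a = mb b) with
                     | left H => proj1_sig (cid H) | right _ => a end).
    split.
    + intros a Ha. destruct (excluded_middle_informative _) as [H|H]; [|contradiction].
      destruct (cid H) as [b [Bb Eb]]. auto.
    + intros a a' Ha Ha'.
      destruct (excluded_middle_informative _) as [H|H]; [|contradiction].
      destruct (excluded_middle_informative _) as [H'|H']; [|contradiction].
      destruct (cid H) as [b [Bb Eb]] eqn:E1. destruct (cid H') as [b' [Bb' Eb']] eqn:E2. simpl.
      intros E. rewrite Eb, Eb', E. reflexivity.
Qed.


Definition ext (h t : list nat) : Prop := exists r, t = h ++ r.

Definition incompat (tau : list nat -> nat) (t0 t1 : list nat) : Prop :=
  exists j, j < length t0 /\ j < length t1 /\ tau (firstn (S j) t0) <> tau (firstn (S j) t1).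

Lemma ext_nth h t i d : ext h t -> i < length h -> nth i t d = nth i h d.
Proof. intros [r ->] H. apply app_nth1. auto. Qed.

Lemma ext_firstn h t i : ext h t -> i <= length h -> firstn i t = firstn i h.
Proof. intros [r ->] H. rewrite firstn_app. replace (i - length h) with 0 by lia.
  simpl. apply app_nil_r. Qed.

Lemma ext_trans a b c : ext a b -> ext b c -> ext a c.
Proof. intros [r ->] [r' ->]. exists (r ++ r'). symmetry. apply app_assoc. Qed.

Lemma ext_refl a : ext a a.
Proof. exists []. symmetry. apply app_nil_r. Qed.

Lemma split_ex A tau : domstar_II_winning A tau ->
  forall h, exists p : list nat * list nat, ext h (fst p) /\ ext h (snd p) /\ incompat tau (fst p) (snd p).
Proof.
  intros Hw h. apply NNPP. intros Hn.
  assert (Hc : forall t0 t1 j, ext h t0 -> ext h t1 -> j < length t0 -> j < length t1 ->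
                tau (firstn (S j) t0) = tau (firstn (S j) t1)).
  { intros t0 t1 j E0 E1 L0 L1. apply NNPP. intros Hne. apply Hn.
    exists (t0, t1). simpl. split; auto. split; auto. exists j; auto. }
  set (m := fun j => tau (firstn (S j) (h ++ repeat 0 (S j)))).
  set (n := fun k => if k <? length h then nth k h 0 else m k).
  assert (Hh : prefix n (length h) = h).
  { apply prefix_of_list with (d := 0). intros i Hi. unfold n.
    apply Nat.ltb_lt in Hi. rewrite Hi. reflexivity. }
  assert (Hm : forall k, domstar_II_play tau n k = m k).
  { intros k. unfold domstar_II_play.
    set (L := prefix n (length h + S k)).
    assert (EL : ext h L).
    { unfold L, prefix. rewrite seq_app, map_app. fold (prefix n (length h)). rewrite Hh.
      eexists; reflexivity. }
    assert (Hpre : firstn (S k) L = prefix n (S k)) by (apply prefix_firstn; lia).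
    rewrite <- Hpre. unfold m. apply Hc.
    - exact EL.
    - eexists; reflexivity.
    - unfold L. rewrite prefix_length. lia.
    - rewrite length_app, repeat_length. lia. }
  destruct (Hw n) as [_ [N HN]].
  specialize (HN (N + length h) ltac:(lia)). rewrite Hm in HN.
  unfold n in HN. replace (N + length h <? length h) with false in HN
    by (symmetry; apply Nat.ltb_ge; lia). lia.
Qed.

Lemma incompat_len tau h t0 t1 : ext h t0 -> ext h t1 -> incompat tau t0 t1 ->
  length h < length t0 /\ length h < length t1.
Proof.
  intros E0 E1 [j [L0 [L1 Hj]]].
  destruct (le_lt_dec (length h) j) as [H|H]; [lia|].
  exfalso. apply Hj. rewrite (ext_firstn h t0), (ext_firstn h t1); auto.
Qed.

Fixpoint tree (sp : list nat -> list nat * list nat) (z : nat -> bool) (k : nat) : list nat :=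
  match k with
  | 0 => []
  | S k => if z k then snd (sp (tree sp z k)) else fst (sp (tree sp z k))
  end.

Lemma gamestarII_cont A : P_gamestar_II A -> le_card (fun _ : nat -> bool => True) A.
Proof.
  intros [tau Hw].
  pose proof (split_ex A tau Hw) as Hs.
  set (sp := fun h => proj1_sig (cid (Hs h))).
  assert (Hsp : forall h, ext h (fst (sp h)) /\ ext h (snd (sp h)) /\ incompat tau (fst (sp h)) (snd (sp h))).
  { intros h. unfold sp. destruct (cid (Hs h)) as [p Hp]. exact Hp. }
  assert (Hstep : forall z k, ext (tree sp z k) (tree sp z (S k)) /\
                              length (tree sp z k) < length (tree sp z (S k))).
  { intros z k. simpl. destruct (Hsp (tree sp z k)) as [E0 [E1 I]].
    pose proof (incompat_len _ _ _ _ E0 E1 I). destruct (z k); split; tauto || lia. }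
  assert (Hlen : forall z k, k <= length (tree sp z k)).
  { intros z k. induction k; [lia|]. specialize (Hstep z k). lia. }
  assert (Hext : forall z k k', k <= k' -> ext (tree sp z k) (tree sp z k')).
  { intros z k k' H. induction H; [apply ext_refl|]. eapply ext_trans; [eauto|apply Hstep]. }
  set (nz := fun z k => nth k (tree sp z (S k)) 0).
  assert (Hpre : forall z k, prefix (nz z) (length (tree sp z k)) = tree sp z k).
  { intros z k. apply prefix_of_list with (d := 0). intros i Hi. unfold nz.
    destruct (le_lt_dec (S i) k) as [H|H].
    - symmetry. apply (ext_nth (tree sp z (S i))); [apply Hext; auto|]. specialize (Hlen z (S i)). lia.
    - apply (ext_nth (tree sp z k)); [apply Hext; lia|auto]. }
  exists (fun z => domstar_II_play tau (nz z)). split.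
  - intros z _. apply (Hw (nz z)).
  - intros z z' _ _ Heq. apply NNPP. intros Hne.
    assert (Hex : exists k, z k <> z' k).
    { apply NNPP. intros H. apply Hne. apply functional_extensionality. intros k.
      apply NNPP. intros H2. apply H. eauto. }
    assert (Hmin : exists k, z k <> z' k /\ forall j, j < k -> z j = z' j).
    { destruct Hex as [k Hk]. induction k as [k IH] using (well_founded_induction lt_wf).
      destruct (classic (forall j, j < k -> z j = z' j)) as [H|H]; [eauto|].
      apply not_all_ex_not in H. destruct H as [j Hj].
      apply imply_to_and in Hj. destruct Hj as [Hj1 Hj2]. eapply IH; eauto. }
    destruct Hmin as [k [Hk Hlt]].
    assert (Heqt : forall j, j <= k -> tree sp z j = tree sp z' j).
    { induction j; intros Hj; [reflexivity|]. simpl. rewrite IHj by lia.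
      rewrite Hlt by lia. reflexivity. }
    set (h := tree sp z k).
    destruct (Hsp h) as [E0 [E1 [j [L0 [L1 Hj]]]]].
    assert (Hval : forall w, tree sp w k = h -> forall b, w k = b ->
                   domstar_II_play tau (nz w) j = tau (firstn (S j) (if b then snd (sp h) else fst (sp h)))).
    { intros w Hw' b Hb. unfold domstar_II_play.
      assert (Ht : tree sp w (S k) = if b then snd (sp h) else fst (sp h)).
      { simpl. rewrite Hw', Hb. reflexivity. }
      rewrite <- (prefix_firstn (nz w) (S j) (length (tree sp w (S k)))).
      + rewrite Hpre, Ht. reflexivity.
      + rewrite Ht. destruct b; lia. }
    assert (V1 := Hval z eq_refl (z k) eq_refl).
    assert (V2 := Hval z' (eq_sym (Heqt k (le_n k))) (z' k) eq_refl).
    assert (E := f_equal (fun f => f j) Heq). cbv beta in E. rewrite V1, V2 in E.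
    destruct (z k), (z' k); try contradiction; auto.
Qed.


Section Dich.
Variable T : Type.
Variable F : T -> Prop.

Fixpoint LL (k : nat) : list T :=
  match k with
  | 0 => []
  | S k => match excluded_middle_informative (exists x, F x /\ ~ In x (LL k)) with
           | left H => LL k ++ [proj1_sig (cid H)]
           | right _ => LL k end
  end.

Lemma dichotomy :
  (exists idx : T -> nat, forall x y, F x -> F y -> idx x = idx y -> x = y) \/
  (exists w : nat -> T, (forall k, F (w k)) /\ forall j k, w j = w k -> j = k).
Proof.
  destruct (classic (forall k, exists x, F x /\ ~ In x (LL k))) as [HB|HA].
  - right. set (w := fun k => proj1_sig (cid (HB k))).
    assert (Hw : forall k, F (w k) /\ ~ In (w k) (LL k)).
    { intros k. unfold w. destruct (cid (HB k)). auto. }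
    assert (HL : forall k, LL (S k) = LL k ++ [w k]).
    { intros k. simpl. destruct (excluded_middle_informative _) as [H|H].
      - unfold w. rewrite (proof_irrelevance _ H (HB k)). reflexivity.
      - exfalso. apply H. apply HB. }
    assert (Hin : forall j k, j < k -> In (w j) (LL k)).
    { intros j k H. induction H.
      - rewrite HL. apply in_or_app. right. left. auto.
      - rewrite HL. apply in_or_app. left. auto. }
    exists w. split; [apply Hw|].
    intros j k E. destruct (lt_eq_lt_dec j k) as [[H|H]|H]; auto.
    + exfalso. apply (proj2 (Hw k)). rewrite <- E. auto.
    + exfalso. apply (proj2 (Hw j)). rewrite E. auto.
  - left. apply not_all_ex_not in HA. destruct HA as [k Hk].
    assert (Hall : forall x, F x -> exists n, nth_error (LL k) n = Some x).
    { intros x Fx. apply In_nth_error. apply NNPP. intros H. apply Hk. eauto. }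
    exists (fun x => match excluded_middle_informative (exists n, nth_error (LL k) n = Some x) with
                     | left H => proj1_sig (cid H) | right _ => 0 end).
    intros x y Fx Fy.
    destruct (excluded_middle_informative _) as [H1|H1]; [|exfalso; auto].
    destruct (excluded_middle_informative _) as [H2|H2]; [|exfalso; auto].
    destruct (cid H1) as [n1 E1]. destruct (cid H2) as [n2 E2]. simpl. intros ->. congruence.
Qed.
End Dich.

Section Zorn.
Variable T : Type.
Variable B : T -> Prop.

Definition Good (p : (T -> Prop) * (nat -> T -> T)) : Prop :=
  (forall x, fst p x -> B x) /\ (forall c x, fst p x -> fst p (snd p c x)) /\
  (forall c c' x x', fst p x -> fst p x' -> snd p c x = snd p c' x' -> c = c' /\ x = x').

Definition Lep (p q : (T -> Prop) * (nat -> T -> T)) : Prop :=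
  (forall x, fst p x -> fst q x) /\ (forall c x, fst p x -> snd q c x = snd p c x).

Definition U := {p | Good p}.
Definition Rb (u v : U) : bool :=
  if excluded_middle_informative (Lep (proj1_sig u) (proj1_sig v)) then true else false.

Lemma RbE u v : is_true (Rb u v) <-> Lep (proj1_sig u) (proj1_sig v).
Proof. unfold Rb, is_true. destruct (excluded_middle_informative _); split; auto; discriminate. Qed.

Lemma good0 : Good ((fun _ => False), (fun _ x => x)).
Proof. split; [|split]; simpl; tauto. Qed.

Lemma zorn_max : exists S h, Good (S, h) /\
  forall S' h', Good (S', h') -> Lep (S, h) (S', h') -> Lep (S', h') (S, h).
Proof.
  destruct (@classical_sets.ZL_preorder U (exist _ _ good0) Rb) as [[[S h] G] Hmax].
  - intros t. apply RbE. split; auto.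
  - intros r s t H1 H2. apply RbE in H1, H2. apply RbE. destruct H1 as [a1 b1], H2 as [a2 b2].
    split; auto. intros c x Hx. rewrite b2 by auto. auto.
  - intros Ach Htot.
    set (Ss := fun x => exists u, Ach u /\ fst (proj1_sig u) x).
    set (hs := fun c x => match excluded_middle_informative (Ss x) with
                          | left H => snd (proj1_sig (proj1_sig (cid H))) c x
                          | right _ => x end).
    assert (Key : forall u c x, Ach u -> fst (proj1_sig u) x -> hs c x = snd (proj1_sig u) c x).
    { intros u c x Au Hx. unfold hs. destruct (excluded_middle_informative _) as [H|H].
      - destruct (cid H) as [v [Av Hv]]. simpl.
        destruct (Htot u v Au Av) as [R|R]; apply RbE in R; destruct R as [R1 R2].
        + apply R2; auto.
        + symmetry. apply R2; auto.
      - exfalso. apply H. exists u. auto. }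
    assert (Gs : Good (Ss, hs)).
    { split; [|split]; simpl.
      - intros x [u [Au Hx]]. destruct (proj2_sig u) as [G1 _]. auto.
      - intros c x [u [Au Hx]]. rewrite (Key u) by auto. exists u. split; auto.
        destruct (proj2_sig u) as [_ [G2 _]]. auto.
      - intros c c' x x' [u [Au Hx]] [v [Av Hx']].
        rewrite (Key u) by auto. rewrite (Key v) by auto.
        destruct (Htot u v Au Av) as [R|R]; apply RbE in R; destruct R as [R1 R2].
        + rewrite <- R2 by auto. destruct (proj2_sig v) as [_ [_ G3]]. apply G3; auto.
        + rewrite <- (R2 c' x') by auto. destruct (proj2_sig u) as [_ [_ G3]]. apply G3; auto. }
    exists (exist _ _ Gs). intros u Au. apply RbE. simpl. split.
    + intros x Hx. exists u. auto.
    + intros c x Hx. apply Key; auto.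
  - exists S, h. split; auto. intros S' h' G' L.
    assert (R := Hmax (exist _ _ G') (proj2 (RbE (exist _ _ G) (exist _ _ G')) L)).
    apply RbE in R. exact R.
Qed.

Lemma nat_prod_inj (w0 : nat -> T) : (forall k, B (w0 k)) -> (forall j k, w0 j = w0 k -> j = k) ->
  exists iota : nat -> T -> T, (forall c b, B b -> B (iota c b)) /\
    (forall c c' b b', B b -> B b' -> iota c b = iota c' b' -> c = c' /\ b = b').
Proof.
  intros Bw0 Iw0.
  destruct zorn_max as [Sm [h [[G1 [G2 G3]] Hmax]]]. simpl in G1, G2, G3.
  assert (NoSeq : forall w : nat -> T, (forall k, B (w k) /\ ~ Sm (w k)) ->
                  (forall j k, w j = w k -> j = k) -> False).
  { intros w Hw Iw.
    set (S' := fun x => Sm x \/ exists i, x = w i).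
    set (h' := fun c x => if excluded_middle_informative (Sm x) then h c x
               else match excluded_middle_informative (exists i, x = w i) with
                    | left H => w (to_nat (c, proj1_sig (cid H)))
                    | right _ => x end).
    assert (G' : Good (S', h')).
    { split; [|split]; simpl.
      - intros x [Hx|[i ->]]; [auto|apply Hw].
      - intros c x Hx. unfold h'. destruct (excluded_middle_informative (Sm x)) as [H|H].
        + left. auto.
        + destruct (excluded_middle_informative _) as [H2|H2].
          * right. eauto.
          * destruct Hx as [Hx|Hx]; contradiction.
      - intros c c' x x' Hx Hx'. unfold h'.
        destruct (excluded_middle_informative (Sm x)) as [H|H];
        destruct (excluded_middle_informative (Sm x')) as [H'|H'].
        + apply G3; auto.
        + destruct (excluded_middle_informative _) as [H2|H2]; [|destruct Hx' as [Hx'|Hx']; contradiction].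
          intros E. exfalso. apply (proj2 (Hw (to_nat (c', proj1_sig (cid H2))))). rewrite <- E. auto.
        + destruct (excluded_middle_informative _) as [H2|H2]; [|destruct Hx as [Hx|Hx]; contradiction].
          intros E. exfalso. apply (proj2 (Hw (to_nat (c, proj1_sig (cid H2))))). rewrite E. auto.
        + destruct (excluded_middle_informative (exists i, x = w i)) as [H2|H2]; [|destruct Hx as [Hx|Hx]; contradiction].
          destruct (excluded_middle_informative (exists i, x' = w i)) as [H2'|H2']; [|destruct Hx' as [Hx'|Hx']; contradiction].
          destruct (cid H2) as [i Ei]. destruct (cid H2') as [i' Ei']. cbn [proj1_sig].
          intros E. apply Iw in E. apply (f_equal of_nat) in E. rewrite !cancel_of_to in E.
          injection E as -> ->. split; congruence. }
    assert (L : Lep (Sm, h) (S', h')).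
    { split; simpl.
      - intros x Hx. left. auto.
      - intros c x Hx. unfold h'. destruct (excluded_middle_informative (Sm x)); [auto|contradiction]. }
    destruct (Hmax _ _ G' L) as [L1 _]. simpl in L1.
    apply (proj2 (Hw 0)). apply L1. right. eauto. }
  destruct (dichotomy T (fun x => B x /\ ~ Sm x)) as [[idx Hidx]|[w [Hw Iw]]];
    [|exfalso; exact (NoSeq w Hw Iw)].
  assert (Hs0 : exists s0, Sm s0).
  { apply NNPP. intros H. apply (NoSeq w0); auto. intros k. split; auto. intros Hk. apply H. eauto. }
  destruct Hs0 as [s0 Hs0].
  exists (fun c b => if excluded_middle_informative (Sm b) then h (2 * c) b
                     else h (S (2 * to_nat (c, idx b))) s0).
  split.
  - intros c b Bb. destruct (excluded_middle_informative (Sm b)); apply G1; apply G2; auto.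
  - intros c c' b b' Bb Bb'.
    destruct (excluded_middle_informative (Sm b)) as [H|H];
    destruct (excluded_middle_informative (Sm b')) as [H'|H']; intros E.
    + apply G3 in E; auto. destruct E as [E1 E2]. split; [lia|auto].
    + apply G3 in E; auto. lia.
    + apply G3 in E; auto. lia.
    + apply G3 in E; auto. destruct E as [E _].
      assert (E' : to_nat (c, idx b) = to_nat (c', idx b')) by lia.
      apply (f_equal of_nat) in E'. rewrite !cancel_of_to in E'. injection E' as -> E'.
      split; auto; apply Hidx; auto.
Qed.
End Zorn.


Fixpoint chain (ch : baire -> baire) (k : nat) : baire :=
  match k with
  | 0 => ch (fun _ => 0)
  | S k => ch (fun n => S (chain ch k n))
  end.

Lemma dom_infinite B : dominating B ->
  exists w : nat -> baire, (forall k, B (w k)) /\ forall j k, w j = w k -> j = k.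
Proof.
  intros HB. set (ch := fun x => proj1_sig (cid (HB x))).
  assert (Hch : forall x, B (ch x) /\ le_star x (ch x)).
  { intros x. unfold ch. destruct (cid (HB x)). auto. }
  exists (chain ch). split.
  - intros [|k]; apply Hch.
  - assert (Hlt : forall j k, j < k -> le_star (fun n => S (chain ch j n)) (chain ch k)).
    { intros j k H. induction H.
      - apply Hch.
      - eapply le_star_trans; [exact IHle|].
        apply le_star_trans with (y := fun n => S (chain ch m n)); [|apply Hch].
        exists 0. intros; lia. }
    assert (Hne : forall j k, j < k -> chain ch j <> chain ch k).
    { intros j k H E. destruct (Hlt j k H) as [N HN]. specialize (HN N (le_n N)).
      rewrite E in HN. lia. }
    intros j k E. destruct (lt_eq_lt_dec j k) as [[H|H]|H]; auto.
    + exfalso. apply (Hne j k H E).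
    + exfalso. apply (Hne k j H (eq_sym E)).
Qed.

Lemma dom_gameII B : dominating B -> exists A, P_game_II A /\ le_card A B.
Proof.
  intros HB.
  destruct (dom_infinite B HB) as [w0 [Bw Iw]].
  destruct (nat_prod_inj baire B w0 Bw Iw) as [iota [Hi1 Hi2]].
  set (sh := fun (b : baire) (c : nat) => fun k => b k + c).
  set (A := fun a => exists p : nat * baire, B (snd p) /\ a = sh (snd p) (fst p)).
  exists A. split.
  - exists (fun _ => true). intros n. split; [exists 0; auto|].
    destruct (HB (fun k => S (n k))) as [y [By [N HN]]].
    set (c := S (list_max (map n (seq 0 N)))).
    exists (sh y c). split; [exists (c, y); auto|].
    intros k. unfold dom_II_play. split; [intros _|reflexivity].
    unfold sh. destruct (le_lt_dec N k) as [H|H].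
    + specialize (HN k H). lia.
    + assert (n k <= list_max (map n (seq 0 N))).
      { apply in_list_max. apply in_map. apply in_seq. lia. }
      unfold c. lia.
  - exists (fun a => match excluded_middle_informative (A a) with
                     | left H => let p := proj1_sig (cid H) in iota (fst p) (snd p)
                     | right _ => a end).
    split.
    + intros a Ha. destruct (excluded_middle_informative (A a)) as [H|H]; [|contradiction].
      destruct (cid H) as [p [Bp Ep]]. simpl. auto.
    + intros a a' Ha Ha'.
      destruct (excluded_middle_informative (A a)) as [H|H]; [|contradiction].
      destruct (excluded_middle_informative (A a')) as [H'|H']; [|contradiction].
      destruct (cid H) as [[c b] [Bp Ep]]. destruct (cid H') as [[c' b'] [Bp' Ep']]. simpl in *.
      intros E. apply Hi2 in E; auto. destruct E as [-> ->]. congruence.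
Qed.

Theorem mainTheorem4 :
  same_min P_game_I dominating /\
  same_min P_game_II dominating /\
  same_min P_gamestar_I dominating /\
  min_is_continuum P_gamestar_II.
Proof.
  split; [|split; [|split]].
  - split.
    + intros A HA. exists A. split; [apply gameI_dom; auto|apply le_card_refl].
    + intros B HB. exists B. split; [apply dom_gameI; auto|apply le_card_refl].
  - split.
    + intros A HA. exists A. split; [apply gameII_dom; auto|apply le_card_refl].
    + apply dom_gameII.
  - split.
    + intros A HA. exists A. split; [apply gamestarI_dom; auto|apply le_card_refl].
    + apply dom_gamestarI.
  - split.
    + apply gamestarII_cont.
    + exists (fun _ => True). split; [apply gamestarII_top|apply baire_into_cantor].
Qed.
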